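(* Let $\Omega$ be a nonempty set, $\mathcal A$ an algebra on $\Omega$, and $\mathcal X_{\mathcal A}$ the set of bounded $\mathcal A$-measurable functions $\Omega\to\mathbb R$ (constants $c\in\mathbb R$ are identified with constant functions). Let $\preceq$ be a total preorder on $\mathcal X_{\mathcal A}$ that is increasing, i.e. $0\prec 1$, and that can be numerically represented, i.e. there exists $\mathcal R:\mathcal X_{\mathcal A}\to\mathbb R$ with $X\preceq Y$ if and only if $\mathcal R(X)\le\mathcal R(Y)$. Then the following are equivalent: (i) for all $X,Y\in\mathcal X_{\mathcal A}$ and all increasing continuous $\phi:\mathbb R\to\mathbb R$, $X\preceq Y$ implies $\phi(X)\preceq\phi(Y)$; (ii) there exists a numerical representation $\mathcal R$ of $\preceq$ satisfying ordinality, i.e. $\mathcal R(\phi\circ X)=\phi(\mathcal R(X))$ for all $X\in\mathcal X_{\mathcal A}$ and all increasing continuous $\phi:\mathbb R\to\mathbb R$.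
   Context: A total preorder is a transitive and complete binary relation; $\prec$ denotes its strict part. A function $X$ is $\mathcal A$-measurable if $\{X>x\}\in\mathcal A$ and $\{X\ge x\}\in\mathcal A$ for all $x\in\mathbb R$. ''Increasing'' means non-strictly increasing. *)

(* Defs.v *)
From Stdlib Require Import Reals.
Open Scope R_scope.

Definition is_algebra {Omega : Type} (A : (Omega -> Prop) -> Prop) : Prop :=
  A (fun _ => True) /\
  (forall S, A S -> A (fun w => ~ S w)) /\
  (forall S T, A S -> A T -> A (fun w => S w \/ T w)).

Definition A_measurable {Omega : Type} (A : (Omega -> Prop) -> Prop)
  (X : Omega -> R) : Prop :=
  forall x : R, A (fun w => X w > x) /\ A (fun w => X w >= x).

Definition bounded_fun {Omega : Type} (X : Omega -> R) : Prop :=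
  exists M : R, forall w, Rabs (X w) <= M.

Definition XA {Omega : Type} (A : (Omega -> Prop) -> Prop) (X : Omega -> R) : Prop :=
  A_measurable A X /\ bounded_fun X.

Definition cst {Omega : Type} (c : R) : Omega -> R := fun _ => c.

Definition total_preorder_on {Omega : Type} (A : (Omega -> Prop) -> Prop)
  (le : (Omega -> R) -> (Omega -> R) -> Prop) : Prop :=
  (forall X Y Z, XA A X -> XA A Y -> XA A Z -> le X Y -> le Y Z -> le X Z) /\
  (forall X Y, XA A X -> XA A Y -> le X Y \/ le Y X).

Definition strict {T : Type} (le : T -> T -> Prop) (X Y : T) : Prop :=
  le X Y /\ ~ le Y X.

Definition num_rep {Omega : Type} (A : (Omega -> Prop) -> Prop)
  (le : (Omega -> R) -> (Omega -> R) -> Prop) (Rep : (Omega -> R) -> R) : Prop :=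
  forall X Y, XA A X -> XA A Y -> (le X Y <-> Rep X <= Rep Y).

Definition incr_cont (phi : R -> R) : Prop :=
  (forall x y, x <= y -> phi x <= phi y) /\ continuity phi.

(* Main.v *)
Require Import Defs.
From Stdlib Require Import Reals Lra Lia Classical FunctionalExtensionality PropExtensionality ClassicalEpsilon Cantor.
Open Scope R_scope.




Lemma cont_nb f t x : continuity f -> (f t > x -> exists d, d > 0 /\ forall s, Rabs (s - t) < d -> f s > x)
  /\ (f t < x -> exists d, d > 0 /\ forall s, Rabs (s - t) < d -> f s < x).
Proof.
  intros Hc. split; intros Hf.
  - destruct (Hc t (f t - x)) as [d [Hd Hs]]; [lra|].
    exists d; split; auto. intros s Hst.
    destruct (Req_dec s t) as [->|Hne]; [lra|].
    assert (H := Hs s). simpl in H. unfold R_dist in H.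
    destruct (Rabs_def2 _ _ (H (conj (conj I (not_eq_sym Hne)) Hst))). lra.
  - destruct (Hc t (x - f t)) as [d [Hd Hs]]; [lra|].
    exists d; split; auto. intros s Hst.
    destruct (Req_dec s t) as [->|Hne]; [lra|].
    assert (H := Hs s). simpl in H. unfold R_dist in H.
    destruct (Rabs_def2 _ _ (H (conj (conj I (not_eq_sym Hne)) Hst))). lra.
Qed.

Definition step (u : nat -> R) (n : nat) (p : R * R) : R * R :=
  let (a, b) := p in
  if Rle_dec (u n) ((a + b) / 2) then (b - (b - a) / 3, b) else (a, a + (b - a) / 3).

Fixpoint nest (u : nat -> R) (n : nat) : R * R :=
  match n with O => (0, 1) | S m => step u m (nest u m) end.

Lemma step_prop u n a b : a < b ->
  let p := step u n (a, b) in
  fst p < snd p /\ a <= fst p /\ snd p <= b /\ (forall y, fst p <= y <= snd p -> y <> u n).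
Proof.
  intros Hab. unfold step. destruct (Rle_dec (u n) ((a+b)/2)); simpl;
    (split; [lra| split; [lra| split; [lra| intros y Hy Heq; lra]]]).
Qed.

Lemma nest_lt u n : fst (nest u n) < snd (nest u n).
Proof.
  induction n as [|n IH]; simpl; [lra|].
  destruct (nest u n) as [a b]. apply (step_prop u n a b IH).
Qed.

Lemma nest_prop u n : fst (nest u n) < snd (nest u n) /\
  fst (nest u n) <= fst (nest u (S n)) /\ snd (nest u (S n)) <= snd (nest u n) /\
  (forall y, fst (nest u (S n)) <= y <= snd (nest u (S n)) -> y <> u n).
Proof.
  split; [apply nest_lt|]. simpl. assert (H := nest_lt u n).
  destruct (nest u n) as [a b]. simpl in *. destruct (step_prop u n a b H) as [_ X]. exact X.
Qed.

Lemma nest_mono u n k : fst (nest u n) <= fst (nest u (k + n)) /\ snd (nest u (k + n)) <= snd (nest u n).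
Proof.
  induction k as [|k IH]; [simpl; lra|]. change (S k + n)%nat with (S (k + n)).
  destruct (nest_prop u (k + n)) as [_ [H2 [H3 _]]]. lra.
Qed.

Lemma nest_ab u n m : fst (nest u n) <= snd (nest u m).
Proof.
  destruct (Nat.le_ge_cases n m) as [H|H].
  - replace m with ((m - n) + n)%nat by lia.
    destruct (nest_mono u n (m - n)) as [A _].
    destruct (nest_prop u ((m - n) + n)) as [B _]. lra.
  - replace n with ((n - m) + m)%nat by lia.
    destruct (nest_mono u m (n - m)) as [_ A].
    destruct (nest_prop u ((n - m) + m)) as [B _]. lra.
Qed.

Lemma no_surj (u : nat -> R) : exists x, forall n, u n <> x.
Proof.
  set (E := fun y => exists n, y = fst (nest u n)).
  assert (Hb : bound E). { exists 1. intros y [n ->]. apply (nest_ab u n 0). }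
  assert (He : exists y, E y) by (exists (fst (nest u 0)); exists 0%nat; reflexivity).
  destruct (completeness E Hb He) as [x [Hub Hl]].
  exists x. intros n Hn.
  destruct (nest_prop u n) as [_ [_ [_ H4]]].
  apply (H4 x); [|auto].
  split.
  - apply Hub. exists (S n). reflexivity.
  - apply Hl. intros y [m ->]. apply nest_ab.
Qed.

Definition q (m : nat) : R :=
  let (n, m') := of_nat m in let (a, b) := of_nat m' in (INR a - INR b) / INR (S n).

Lemma q_dense a b : a < b -> exists m, a < q m < b.
Proof.
  intros Hab.
  destruct (archimed_cor1 (b - a)) as [N [HN HN0]]; [lra|].
  assert (HNp : 0 < INR N) by (apply lt_0_INR; lia).
  set (k := up (a * INR N)).
  destruct (archimed (a * INR N)) as [Hk1 Hk2]. fold k in Hk1, Hk2.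
  assert (H1 : 1 < (b - a) * INR N).
  { apply (Rmult_lt_compat_r (INR N)) in HN; auto.
    rewrite Rinv_l in HN; lra. }
  exists (to_nat (pred N, to_nat (Z.to_nat k, Z.to_nat (- k)))).
  unfold q. rewrite !cancel_of_to.
  replace (S (pred N)) with N by lia.
  replace (INR (Z.to_nat k) - INR (Z.to_nat (- k))) with (IZR k).
  2:{ rewrite !INR_IZR_INZ, <- minus_IZR. f_equal. lia. }
  split.
  - apply (Rmult_lt_reg_r (INR N)); auto. unfold Rdiv. rewrite Rmult_assoc, Rinv_l; lra.
  - apply (Rmult_lt_reg_r (INR N)); auto. unfold Rdiv. rewrite Rmult_assoc, Rinv_l; lra.
Qed.

Lemma no_gaps (f g : R -> R) : (forall t, f t < g t) ->
  (forall t t', t < t' -> g t <= f t') -> False.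
Proof.
  intros Hfg Hord.
  set (u := fun m => epsilon (inhabits 0) (fun t => f t < q m < g t)).
  destruct (no_surj u) as [x Hx].
  destruct (q_dense (f x) (g x) (Hfg x)) as [m Hm].
  assert (Hu : f (u m) < q m < g (u m)).
  { unfold u. apply (epsilon_spec (inhabits 0) (fun t => f t < q m < g t)). exists x; exact Hm. }
  apply (Hx m).
  destruct (Rtotal_order (u m) x) as [H|[H|H]]; auto.
  - specialize (Hord _ _ H). lra.
  - specialize (Hord _ _ H). lra.
Qed.

Section XAfacts.
Context {Omega : Type} (A : (Omega -> Prop) -> Prop) (HA : is_algebra A).

Lemma A_const (P : Prop) : A (fun _ => P).
Proof.
  destruct HA as [HT [HC _]].
  destruct (classic P) as [H|H].
  - replace (fun _ : Omega => P) with (fun _ : Omega => True); auto.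
    apply functional_extensionality; intros; apply propositional_extensionality; tauto.
  - replace (fun _ : Omega => P) with (fun _ : Omega => ~ True); auto.
    apply functional_extensionality; intros; apply propositional_extensionality; tauto.
Qed.

Lemma cst_XA c : XA A (cst c).
Proof.
  split.
  - intros x. unfold cst. split; [exact (A_const (c > x)) | exact (A_const (c >= x))].
  - exists (Rabs c). intros; apply Rle_refl.
Qed.

End XAfacts.

Lemma upper_gt phi x : incr_cont phi ->
  (forall t, phi t > x) \/ (forall t, ~ phi t > x) \/ exists a, forall t, phi t > x <-> t > a.
Proof.
  intros [Hm Hc].
  destruct (classic (exists t, ~ phi t > x)) as [[t1 H1]|H1];
    [| left; intros t; apply NNPP; intros H; apply H1; eauto].
  destruct (classic (exists t, phi t > x)) as [[t0 H0]|H0];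
    [| right; left; intros t H; apply H0; eauto].
  right; right.
  set (E := fun t => ~ phi t > x).
  assert (Hub : forall t, phi t > x -> is_upper_bound E t).
  { intros t Ht s Hs. destruct (Rle_dec s t) as [|Hn]; auto.
    exfalso. apply Hs. assert (phi t <= phi s) by (apply Hm; lra). lra. }
  destruct (completeness E (ex_intro _ t0 (Hub t0 H0)) (ex_intro _ t1 H1)) as [a [Ha1 Ha2]].
  exists a. intros t. split.
  - intros Ht. destruct (proj1 (cont_nb phi t x Hc) Ht) as [d [Hd Hs]].
    assert (Hs' : phi (t - d/2) > x) by (apply Hs; rewrite Rabs_left; lra).
    assert (a <= t - d/2) by (apply Ha2, Hub, Hs'). lra.
  - intros Ht. apply NNPP. intros Hn. assert (t <= a) by (apply Ha1; exact Hn). lra.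
Qed.

Lemma upper_ge phi x : incr_cont phi ->
  (forall t, phi t >= x) \/ (forall t, ~ phi t >= x) \/ exists a, forall t, phi t >= x <-> t >= a.
Proof.
  intros [Hm Hc].
  destruct (classic (exists t, ~ phi t >= x)) as [[t1 H1]|H1];
    [| left; intros t; apply NNPP; intros H; apply H1; eauto].
  destruct (classic (exists t, phi t >= x)) as [[t0 H0]|H0];
    [| right; left; intros t H; apply H0; eauto].
  right; right.
  set (E := fun t => ~ phi t >= x).
  assert (Hub : forall t, phi t >= x -> is_upper_bound E t).
  { intros t Ht s Hs. destruct (Rle_dec s t) as [|Hn]; auto.
    exfalso. apply Hs. assert (phi t <= phi s) by (apply Hm; lra). lra. }
  destruct (completeness E (ex_intro _ t0 (Hub t0 H0)) (ex_intro _ t1 H1)) as [a [Ha1 Ha2]].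
  exists a. intros t. split.
  - intros Ht. assert (a <= t) by (apply Ha2, Hub, Ht). lra.
  - intros Ht. apply NNPP. intros Hn.
    assert (Hlt : phi t < x) by lra.
    destruct (proj2 (cont_nb phi t x Hc) Hlt) as [d [Hd Hs]].
    assert (Hs' : phi (t + d/2) < x) by (apply Hs; rewrite Rabs_right; lra).
    assert (t + d/2 <= a) by (apply Ha1; unfold E; lra). lra.
Qed.

Lemma comp_XA {Omega : Type} (A : (Omega -> Prop) -> Prop) (HA : is_algebra A) X phi :
  XA A X -> incr_cont phi -> XA A (fun w => phi (X w)).
Proof.
  intros [HX [M HM]] Hphi. split.
  - intros x. split.
    + destruct (upper_gt phi x Hphi) as [H|[H|[a H]]].
      * replace (fun w => phi (X w) > x) with (fun _ : Omega => True); [apply (A_const A HA)|].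
        apply functional_extensionality; intros; apply propositional_extensionality; split; auto.
      * replace (fun w => phi (X w) > x) with (fun _ : Omega => False); [apply (A_const A HA)|].
        apply functional_extensionality; intros w; apply propositional_extensionality; split; [tauto|apply H].
      * replace (fun w => phi (X w) > x) with (fun w => X w > a); [apply HX|].
        apply functional_extensionality; intros w; apply propositional_extensionality; symmetry; apply H.
    + destruct (upper_ge phi x Hphi) as [H|[H|[a H]]].
      * replace (fun w => phi (X w) >= x) with (fun _ : Omega => True); [apply (A_const A HA)|].
        apply functional_extensionality; intros; apply propositional_extensionality; split; auto.
      * replace (fun w => phi (X w) >= x) with (fun _ : Omega => False); [apply (A_const A HA)|].
        apply functional_extensionality; intros w; apply propositional_extensionality; split; [tauto|apply H].
      * replace (fun w => phi (X w) >= x) with (fun w => X w >= a); [apply HX|].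
        apply functional_extensionality; intros w; apply propositional_extensionality; symmetry; apply H.
  - exists (Rabs (phi (- M)) + Rabs (phi M)). intros w.
    assert (HMw := HM w). 
    assert (-M <= X w <= M).
    { unfold Rabs in HMw; destruct (Rcase_abs (X w)); lra. }
    destruct Hphi as [Hm _].
    assert (phi (-M) <= phi (X w)) by (apply Hm; lra).
    assert (phi (X w) <= phi M) by (apply Hm; lra).
    apply Rabs_le.
    assert (K1 := Rle_abs (phi M)). assert (K2 := Rle_abs (- phi (-M))). rewrite Rabs_Ropp in K2.
    assert (K3 := Rabs_pos (phi M)). assert (K4 := Rabs_pos (phi (-M))). lra.
Qed.

Definition clamp (a t : R) : R := (Rabs (t - a) - Rabs (t - a - 1) + 1) / 2.

Lemma clamp_ic a : incr_cont (clamp a).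
Proof.
  split.
  - intros x y Hxy. unfold clamp.
    unfold Rabs; repeat destruct Rcase_abs; lra.
  - unfold clamp. reg.
Qed.

Lemma clamp0 a t : t <= a -> clamp a t = 0.
Proof. intros H. unfold clamp. rewrite Rabs_left1 by lra. rewrite Rabs_left1 by lra. lra. Qed.

Lemma clamp1 a t : a + 1 <= t -> clamp a t = 1.
Proof. intros H. unfold clamp. rewrite Rabs_right by lra. rewrite Rabs_right by lra. lra. Qed.

Lemma aff_ic c k : 0 <= k -> incr_cont (fun t => c + k * t).
Proof.
  intros Hk. split.
  - intros x y Hxy. apply Rplus_le_compat_l, Rmult_le_compat_l; auto.
  - reg.
Qed.

Lemma shift_ic t : incr_cont (fun x => x + t).
Proof. split; [intros; lra| reg]. Qed.

Theorem proposition2 (Omega : Type) (Hne : inhabited Omega)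
  (A : (Omega -> Prop) -> Prop) (HA : is_algebra A)
  (le : (Omega -> R) -> (Omega -> R) -> Prop)
  (Htot : total_preorder_on A le)
  (Hincr : strict le (cst 0) (cst 1))
  (Hrep : exists Rep : (Omega -> R) -> R, num_rep A le Rep) :
  (forall X Y : Omega -> R, XA A X -> XA A Y ->
     forall phi : R -> R, incr_cont phi ->
       le X Y -> le (fun w => phi (X w)) (fun w => phi (Y w)))
  <->
  (exists Rep : (Omega -> R) -> R, num_rep A le Rep /\
     forall X : Omega -> R, XA A X ->
       forall phi : R -> R, incr_cont phi ->
         Rep (fun w => phi (X w)) = phi (Rep X)).
Proof.
  destruct Hrep as [r Hr]. split.
  2:{ intros [Rep [HR Hord]] X Y HX HY phi Hphi Hle.
      apply HR; try apply comp_XA; auto.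
      rewrite !Hord by auto. apply (proj1 Hphi). apply HR; auto. }
  intros Hi.
  assert (Hc0 := cst_XA A HA).
  assert (Hcst : forall a b, a < b -> r (cst a) < r (cst b)).
  { intros a b Hab.
    assert (H1 : le (cst a) (cst b)).
    { assert (H := Hi _ _ (Hc0 0) (Hc0 1) _ (aff_ic a (b - a) ltac:(lra)) (proj1 Hincr)). cbv beta in H.
      replace (fun w => a + (b - a) * cst 0 w) with (cst (Omega:=Omega) a) in H
        by (apply functional_extensionality; intros; unfold cst; ring).
      replace (fun w => a + (b - a) * cst 1 w) with (cst (Omega:=Omega) b) in H
        by (apply functional_extensionality; intros; unfold cst; ring).
      exact H. }
    assert (H2 : ~ le (cst b) (cst a)).
    { intros Hba. apply (proj2 Hincr).
      assert (Hk : 0 <= / (b - a)) by (apply Rlt_le, Rinv_0_lt_compat; lra).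
      assert (H := Hi _ _ (Hc0 b) (Hc0 a) _ (aff_ic (- a / (b - a)) (/ (b - a)) Hk) Hba). cbv beta in H.
      replace (fun w => - a / (b - a) + / (b - a) * cst b w) with (cst (Omega:=Omega) 1) in H
        by (apply functional_extensionality; intros; unfold cst; field; lra).
      replace (fun w => - a / (b - a) + / (b - a) * cst a w) with (cst (Omega:=Omega) 0) in H
        by (apply functional_extensionality; intros; unfold cst; field; lra).
      exact H. }
    apply (Hr _ _ (Hc0 a) (Hc0 b)) in H1.
    destruct (Rle_lt_dec (r (cst b)) (r (cst a))) as [H|H]; auto.
    exfalso; apply H2; apply Hr; auto. }
  assert (Hshift : forall X Y t, XA A X -> XA A Y -> le X Y ->
            le (fun w => X w + t) (fun w => Y w + t)).
  { intros X Y t HX HY H. apply (Hi X Y HX HY _ (shift_ic t) H). }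
  assert (Hunshift : forall X Y t, XA A X -> XA A Y ->
            le (fun w => X w + t) (fun w => Y w + t) -> le X Y).
  { intros X Y t HX HY H.
    assert (H' := Hshift _ _ (- t) (comp_XA A HA X _ HX (shift_ic t))
                    (comp_XA A HA Y _ HY (shift_ic t)) H). cbv beta in H'.
    replace (fun w => X w + t + - t) with X in H'
      by (apply functional_extensionality; intros; ring).
    replace (fun w => Y w + t + - t) with Y in H'
      by (apply functional_extensionality; intros; ring).
    exact H'. }
  assert (Hex : forall X, XA A X -> exists c, r X = r (cst c)).
  { intros X HX. pose proof HX as [_ [M HM]].
    assert (Hb : forall w, -M <= X w <= M).
    { intros w. specialize (HM w). unfold Rabs in HM; destruct (Rcase_abs (X w)); lra. }
    assert (Hup : r X <= r (cst (M + 1))).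
    { destruct (Rle_lt_dec (r X) (r (cst (M + 1)))) as [H|H]; auto.
      exfalso. assert (Hl : le (cst (M + 1)) X) by (apply Hr; auto; lra).
      assert (H' := Hi _ _ (Hc0 _) HX _ (clamp_ic M) Hl). cbv beta in H'.
      replace (fun w => clamp M (cst (M + 1) w)) with (cst (Omega:=Omega) 1) in H'
        by (apply functional_extensionality; intros; unfold cst; rewrite clamp1; lra).
      replace (fun w => clamp M (X w)) with (cst (Omega:=Omega) 0) in H'
        by (apply functional_extensionality; intros w; unfold cst; rewrite clamp0;
            [auto| destruct (Hb w); lra]).
      exact (proj2 Hincr H'). }
    assert (Hlo : r (cst (- M - 1)) <= r X).
    { destruct (Rle_lt_dec (r (cst (- M - 1))) (r X)) as [H|H]; auto.
      exfalso. assert (Hl : le X (cst (- M - 1))) by (apply Hr; auto; lra).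
      assert (H' := Hi _ _ HX (Hc0 _) _ (clamp_ic (- M - 1)) Hl). cbv beta in H'.
      replace (fun w => clamp (- M - 1) (cst (- M - 1) w)) with (cst (Omega:=Omega) 0) in H'
        by (apply functional_extensionality; intros; unfold cst; rewrite clamp0; lra).
      replace (fun w => clamp (- M - 1) (X w)) with (cst (Omega:=Omega) 1) in H'
        by (apply functional_extensionality; intros w; unfold cst; rewrite clamp1;
            [auto| destruct (Hb w); lra]).
      exact (proj2 Hincr H'). }
    set (S := fun c => r (cst c) <= r X).
    assert (HSb : bound S).
    { exists (M + 1). intros c Hc. destruct (Rle_lt_dec c (M + 1)) as [|H]; auto.
      exfalso. assert (K := Hcst _ _ H). unfold S in Hc. lra. }
    destruct (completeness S HSb (ex_intro _ (- M - 1) Hlo)) as [s [Hs1 Hs2]].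
    exists s.
    assert (HXt : forall t, XA A (fun w => X w + t)) by (intros t; exact (comp_XA A HA X _ HX (shift_ic t))).
    destruct (Rtotal_order (r X) (r (cst s))) as [Hlt|[Heq|Hgt]]; auto; exfalso.
    - assert (Hbelow : forall c, c < s -> r (cst c) <= r X).
      { intros c Hc. destruct (Rle_lt_dec (r (cst c)) (r X)) as [|H]; auto.
        exfalso. assert (s <= c); [|lra]. apply Hs2. intros d Hd.
        destruct (Rle_lt_dec d c) as [|H']; auto.
        assert (K := Hcst _ _ H'). unfold S in Hd. lra. }
      apply (no_gaps (fun t => r (fun w => X w + t)) (fun t => r (cst (s + t)))).
      + intros t.
        assert (HXs : le X (cst s)) by (apply Hr; auto; lra).
        assert (K1 := Hshift _ _ t HX (Hc0 s) HXs). change (fun w => cst s w + t) with (cst (Omega:=Omega) (s + t)) in K1.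
        apply (Hr _ _ (HXt t) (Hc0 _)) in K1.
        destruct (Rle_lt_dec (r (cst (s + t))) (r (fun w => X w + t))) as [H|H]; auto.
        exfalso. apply (Hr _ _ (Hc0 _) (HXt t)) in H.
        change (cst (s + t)) with (fun w : Omega => cst s w + t) in H.
        apply Hunshift in H; auto. apply (Hr _ _ (Hc0 _) HX) in H. lra.
      + intros t t' Htt.
        assert (Hc : le (cst (s + t - t')) X) by (apply Hr; auto; apply Hbelow; lra).
        assert (K := Hshift _ _ t' (Hc0 _) HX Hc).
        replace (fun w => cst (s + t - t') w + t') with (cst (Omega:=Omega) (s + t)) in K
          by (apply functional_extensionality; intros; unfold cst; ring).
        apply Hr; auto.
    - assert (Habove : forall c, s < c -> r X < r (cst c)).
      { intros c Hc. destruct (Rle_lt_dec (r (cst c)) (r X)) as [H|H]; auto.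
        exfalso. assert (c <= s) by (apply Hs1; exact H). lra. }
      apply (no_gaps (fun t => r (cst (s + t))) (fun t => r (fun w => X w + t))).
      + intros t.
        assert (HXs : le (cst s) X) by (apply Hr; auto; lra).
        assert (K1 := Hshift _ _ t (Hc0 s) HX HXs). change (fun w => cst s w + t) with (cst (Omega:=Omega) (s + t)) in K1.
        apply (Hr _ _ (Hc0 _) (HXt t)) in K1.
        destruct (Rle_lt_dec (r (fun w => X w + t)) (r (cst (s + t)))) as [H|H]; auto.
        exfalso. apply (Hr _ _ (HXt t) (Hc0 _)) in H.
        change (cst (s + t)) with (fun w : Omega => cst s w + t) in H.
        apply Hunshift in H; auto. apply (Hr _ _ HX (Hc0 _)) in H. lra.
      + intros t t' Htt.
        assert (Hc : le X (cst (s + t' - t))) by (apply Hr; auto; apply Rlt_le, Habove; lra).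
        assert (K := Hshift _ _ t HX (Hc0 _) Hc).
        replace (fun w => cst (s + t' - t) w + t) with (cst (Omega:=Omega) (s + t')) in K
          by (apply functional_extensionality; intros; unfold cst; ring).
        apply Hr; auto. }
  set (Rep := fun X => epsilon (inhabits 0) (fun c => r X = r (cst c))).
  assert (Hspec : forall X, XA A X -> r X = r (cst (Rep X))).
  { intros X HX. unfold Rep. apply (epsilon_spec (inhabits 0) (fun c => r X = r (cst c))). auto. }
  assert (Hinj : forall a b, r (cst a) = r (cst b) -> a = b).
  { intros a b H. destruct (Rtotal_order a b) as [K|[K|K]]; auto;
    apply Hcst in K; lra. }
  exists Rep. split.
  - intros X Y HX HY. rewrite (Hr X Y HX HY), (Hspec X HX), (Hspec Y HY). split.
    + intros H. destruct (Rle_lt_dec (Rep X) (Rep Y)) as [|K]; auto.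
      apply Hcst in K. lra.
    + intros H. destruct H as [K|K]; [apply Hcst in K; lra| rewrite K; lra].
  - intros X HX phi Hphi.
    assert (HpX := comp_XA A HA X phi HX Hphi).
    apply Hinj. rewrite <- (Hspec _ HpX).
    assert (E := Hspec X HX).
    assert (H1 : le X (cst (Rep X))) by (apply Hr; auto; lra).
    assert (H2 : le (cst (Rep X)) X) by (apply Hr; auto; lra).
    assert (K1 := Hi _ _ HX (Hc0 _) phi Hphi H1). cbv beta in K1.
    assert (K2 := Hi _ _ (Hc0 _) HX phi Hphi H2). cbv beta in K2.
    change (fun w => phi (cst (Rep X) w)) with (cst (Omega:=Omega) (phi (Rep X))) in K1, K2.
    apply (Hr _ _ HpX (Hc0 _)) in K1. apply (Hr _ _ (Hc0 _) HpX) in K2. lra.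
Qed.
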